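(* Let $\alpha\in\mathbb{R}\setminus\pi\mathbb{Z}$, put $a=\cot\alpha$ and $w=a+i$ (so $\bar w=a-i$). For $n\ge 1$ let $C_n=aJ_n+B_n\in M_n(\mathbb{C})$, i.e. the matrix with all diagonal entries $a$, all entries above the diagonal $a+i$ and all entries below the diagonal $a-i$. Let $\chi_n(\alpha;\lambda)=\det(\lambda I_n-C_n)$ and $\chi_0(\alpha;\lambda)=1$. Then for $n\ge 2$ $$\chi_n(\alpha;\lambda)=(2\lambda-2a+w+\bar w)\,\chi_{n-1}(\alpha;\lambda)-(\lambda-a+w)(\lambda-a+\bar w)\,\chi_{n-2}(\alpha;\lambda),$$ and for $n\ge 1$ and real $\lambda$ $$\chi_n(\alpha;\lambda)=\frac{(\cot\alpha+i)(\lambda-i)^n-(\cot\alpha-i)(\lambda+i)^n}{2i}=\operatorname{Im}\big((\cot\alpha+i)(\lambda-i)^n\big).$$ The eigenvalues of $C_n$ are $\lambda_k=\cot\frac{\alpha+k\pi}{n}$, $0\le k\le n-1$; that is, $\chi_n(\alpha;\lambda)=\prod_{k=0}^{n-1}\big(\lambda-\cot\frac{\alpha+k\pi}{n}\big)$.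
   Context: $J_n$ denotes the $n\times n$ matrix all of whose entries equal $1$. $B_n=i\,M$ where $M$ is the $n\times n$ matrix with zero diagonal, all entries above the diagonal equal to $1$ and all entries below the diagonal equal to $-1$. *)

(* Defs.v *)
From HB Require Import structures.
From mathcomp Require Import all_boot all_order all_algebra.
From mathcomp Require Import all_classical all_reals.
From mathcomp Require Import trigo.
From mathcomp Require Import complex.
Set Implicit Arguments. Unset Strict Implicit. Unset Printing Implicit Defensive.
Import Order.TTheory GRing.Theory Num.Theory.
Local Open Scope ring_scope.
Local Open Scope complex_scope.

Definition cot (R : realType) (x : R) : R := cos x / sin x.

Definition Cmat (R : realType) (n : nat) (a : R) : 'M[R[i]]_n :=
  \matrix_(p < n, q < n)
    (if p == q then a%:C
     else if (p < q)%N then a%:C + 'i else a%:C - 'i).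

(* chi_n(alpha; lambda) = det(lambda I_n - C_n), with a = cot alpha.
   For n = 0 the determinant of the empty matrix is 1, matching chi_0 = 1. *)
Definition chi (R : realType) (n : nat) (alpha : R) (lam : R[i]) : R[i] :=
  \det (lam%:M - Cmat n (cot alpha)).

(* Main.v *)
Require Import Defs.
From HB Require Import structures.
From mathcomp Require Import all_boot all_order all_algebra.
From mathcomp Require Import all_classical all_reals.
From mathcomp Require Import trigo.
From mathcomp Require Import complex.
From mathcomp Require Import ring lra zify.
Import Order.TTheory GRing.Theory Num.Theory.
Local Open Scope ring_scope.
Local Open Scope complex_scope.

Section Rank1.
Variable F : comNzRingType.
Variable m : nat.
Local Notation n := m.+1.

Definition Emx : 'M[F]_n := \matrix_(i, j) ((i == j)%:R - ((j == ord0) && (i != ord0))%:R).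

Lemma Emx_mul (Y : 'M[F]_n) i j : (Emx *m Y) i j = Y i j - (i != ord0)%:R * Y ord0 j.
Proof.
rewrite !mxE (bigD1 i) //= !mxE eqxx andbN subr0 mul1r.
case: (eqVneq i ord0) => [->|ni0] /=.
  rewrite big1 ?addr0 ?mul0r ?subr0 // => k /negbTE nk.
  by rewrite mxE eq_sym nk /= subrr mul0r.
rewrite (bigD1 ord0) /=; last by rewrite eq_sym.
rewrite big1 ?addr0; last first.
  move=> k /andP[nki nk0]; rewrite mxE eq_sym (negbTE nki) (negbTE nk0) /= subrr mul0r //.
by rewrite !mxE eqxx ni0 (negbTE ni0) /= sub0r mul1r mulN1r.
Qed.

Lemma det_Emx : \det Emx = 1.
Proof.
rewrite det_trig; last first.
  apply/is_trig_mxP => i j lt; rewrite mxE.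
  have -> : (i == j) = false by apply/negbTE; rewrite neq_ltn lt.
  have -> : (j == ord0) = false by apply/negbTE; rewrite -(inj_eq val_inj) /= -lt0n (leq_ltn_trans _ lt).
  by rewrite subrr.
by rewrite big1 // => i _; rewrite mxE eqxx; case: (i == ord0) => /=; rewrite subr0.
Qed.
Lemma det_rank1 (X : 'M[F]_n) : exists K, forall t, \det (X + const_mx t) = \det X + t * K.
Proof.
have [B EB] : {B : 'M[F]_n | B = Emx *m X} by exists (Emx *m X).
have BE i k : B i k = X i k - (i != ord0)%:R * X ord0 k by rewrite EB Emx_mul.
pose C : 'M[F]_n := \matrix_(i, j) if i == ord0 then 1 else B i j.
exists (\det C) => t.
have hl (i : 'I_m) : (lift ord0 i != ord0) = true by rewrite eq_sym neq_lift.
have hl' (i : 'I_m) : (lift ord0 i == ord0) = false by apply/negbTE; rewrite hl.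
rewrite -[\det (X + _)]mul1r -det_Emx -det_mulmx.
rewrite (@determinant_multilinear _ _ _ B C ord0 1 t).
- by rewrite mul1r EB det_mulmx det_Emx mul1r.
- apply/rowP => k; rewrite [LHS]mxE (Emx_mul (X + const_mx t)) !mxE eqxx /= BE eqxx /=.
  by rewrite !mul0r !subr0 mulr1 mul1r.
- apply/matrixP => i k; rewrite [LHS]mxE [RHS]mxE BE (Emx_mul (X + const_mx t)) hl !mxE /= mul1r; ring.
- apply/matrixP => i k; rewrite [LHS]mxE [RHS]mxE (Emx_mul (X + const_mx t)) /C !mxE hl' BE hl ?mxE /= mul1r; ring.
Qed.
End Rank1.
Lemma detC (R : realType) (a : R) n (lam : R[i]) :
  \det (lam%:M - Cmat n a) * (2 * 'i) =
  (a%:C + 'i) * (lam - 'i) ^+ n - (a%:C - 'i) * (lam + 'i) ^+ n.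
Proof.
case: n => [|m]; first by rewrite det_mx00 !expr0; ring.
have [K HK] := @det_rank1 _ _ (lam%:M - Cmat m.+1 a).
have h1 : \det (lam%:M - Cmat m.+1 a + const_mx (a%:C + 'i)) = (lam + 'i) ^+ m.+1.
  rewrite det_trig; last first.
    apply/is_trig_mxP => i j lt; rewrite !mxE.
    have -> : (i == j) = false by apply/negbTE; rewrite neq_ltn lt.
    rewrite lt /=; ring.
  rewrite (eq_bigr (fun _ => lam + 'i)) ?prodr_const ?card_ord // => i _.
  rewrite !mxE eqxx /=; ring.
have h2 : \det (lam%:M - Cmat m.+1 a + const_mx (a%:C - 'i)) = (lam - 'i) ^+ m.+1.
  rewrite -det_tr det_trig; last first.
    apply/is_trig_mxP => i j lt; rewrite !mxE.
    have -> : (j == i) = false by apply/negbTE; rewrite neq_ltn lt orbT.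
    have -> : (j < i)%N = false by apply/negbTE; rewrite -leqNgt ltnW.
    rewrite /=; ring.
  rewrite (eq_bigr (fun _ => lam - 'i)) ?prodr_const ?card_ord // => i _.
  rewrite !mxE eqxx /=; ring.
rewrite -h1 -h2 !HK; ring.
Qed.
Section T.
Variable R : realType.

Definition E (x : R) : R[i] := (cos x)%:C + 'i * (sin x)%:C.

Lemma Ec (x : R) : E x = cos x +i* sin x.
Proof. by apply/eqP; rewrite eq_complex /= !mul0r !mul1r !subr0 !addr0 !add0r !eqxx. Qed.

Lemma EM (x y : R) : E x * E y = E (x + y).
Proof.
rewrite !Ec cosD sinD /=; congr (_ +i* _); ring.
Qed.

Lemma EX (x : R) n : E x ^+ n = E (n%:R * x).
Proof.
elim: n => [|n IH]; first by rewrite expr0 mul0r Ec sin0 cos0.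
by rewrite exprSr IH EM -[n.+1]addn1 natrD mulrDl mul1r.
Qed.

Lemma nz2i : (2 * 'i : R[i]) != 0.
Proof. rewrite eq_complex /= negb_and; apply/orP; right; rewrite mulr1 addr0 mulr0 addr0; apply/eqP => h; lra. Qed.

Lemma sin_npi (n : nat) : sin (pi *+ n) = 0 :> R.
Proof. by rewrite -[pi *+ n]add0r (alternatingn (@sinDpi R)) sin0 mulr0. Qed.

Lemma sinDnpi (x : R) (n : nat) : sin (x + pi *+ n) = (-1) ^+ n * sin x.
Proof. exact: (alternatingn (@sinDpi R)). Qed.
Lemma cosDnpi (x : R) (n : nat) : cos (x + pi *+ n) = (-1) ^+ n * cos x.
Proof. exact: (alternatingn (@cosDpi R)). Qed.

Lemma sin_eq0 (x : R) : sin x = 0 -> exists k : int, x = k%:~R * pi.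
Proof.
move=> sx; pose k := Num.floor (x / pi); exists k.
have pi0 := @pi_gt0 R.
have h1 : k%:~R * pi <= x by rewrite -ler_pdivlMr // floor_le.
have h2 : x < k%:~R * pi + pi.
  by rewrite -[X in _ + X]mul1r -mulrDl -ltr_pdivrMr // -[1]/(1%:~R) -intrD floorD1_gt.
set y := x - k%:~R * pi.
have sy : sin y = 0.
  case ek: k => [n|n].
  - have ex : x = y + pi *+ n by rewrite /y ek -pmulrn mulr_natl subrK.
    move: sx; rewrite ex sinDnpi => /eqP; rewrite mulf_eq0 signr_eq0 /= => /eqP //.
  - rewrite /y ek NegzE mulrNz -pmulrn mulNr opprK mulr_natl sinDnpi sx mulr0 //.
have : ~ (0 < y).
  move=> y0; have : 0 < sin y by apply: sin_gt0_pi; apply/andP; split => //; rewrite /y; lra.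
  by rewrite sy ltxx.
move=> /negP; rewrite -leNgt /y => hle; lra.
Qed.

Lemma EcotP (x : R) : sin x != 0 -> (sin x)%:C * ((cot x)%:C + 'i) = E x.
Proof. by move=> hs; rewrite /E /cot mulrDr -rmorphM mulrC divfK // mulrC. Qed.
Lemma EcotN (x : R) : sin x != 0 -> (sin x)%:C * ((cot x)%:C - 'i) = E (- x).
Proof.
move=> hs; rewrite /E /cot cosN sinN mulrBr -rmorphM mulrC divfK // rmorphN.
by rewrite mulrN [(sin x)%:C * _]mulrC.
Qed.

Lemma Fn_root (alpha : R) (n k : nat) : sin alpha != 0 -> (0 < n)%N ->
  sin ((alpha + k%:R * pi) / n%:R) != 0 ->
  ((cot alpha)%:C + 'i) * ((cot ((alpha + k%:R * pi) / n%:R))%:C - 'i) ^+ n =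
  ((cot alpha)%:C - 'i) * ((cot ((alpha + k%:R * pi) / n%:R))%:C + 'i) ^+ n.
Proof.
set th := (_ / _) => ha hn ht.
have nz : ((sin alpha * sin th ^+ n)%:C : R[i]) != 0.
  by rewrite fmorph_eq0 mulf_neq0 // expf_neq0.
apply: (mulfI nz); rewrite rmorphM rmorphXn.
have L (a b c d : R[i]) : a * b ^+ n * (c * d ^+ n) = (a * c) * (b * d) ^+ n.
  by rewrite exprMn; ring.
rewrite !L EcotP // EcotN // EcotN // EcotP // !EX !EM.
have hnth : n%:R * th = alpha + k%:R * pi.
  by rewrite /th mulrC divfK // pnatr_eq0 -lt0n.
rewrite mulrN hnth (_ : alpha + - (alpha + k%:R * pi) = - (k%:R * pi)); last by ring.
rewrite (_ : - alpha + (alpha + k%:R * pi) = k%:R * pi); last by ring.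
by rewrite !Ec cosN sinN mulr_natl sin_npi oppr0.
Qed.

Lemma conj_i : ('i : R[i])^* = - 'i.
Proof. by apply/eqP; rewrite eq_complex /= oppr0 !eqxx. Qed.

Lemma nz2 : (2 : R[i]) != 0.
Proof. by rewrite eq_complex /= negb_and; apply/orP; left; apply/eqP => h; lra. Qed.

Lemma sin_th_neq0 (alpha : R) (n k : nat) :
  (forall k : int, alpha != k%:~R * pi) -> (0 < n)%N ->
  sin ((alpha + k%:R * pi) / n%:R) != 0.
Proof.
move=> ha hn; apply/eqP => /sin_eq0 [m hm].
have hnth : alpha = n%:R * ((alpha + k%:R * pi) / n%:R) - k%:R * pi.
  by rewrite mulrC divfK ?addrK // pnatr_eq0 -lt0n.
move: (ha (m * n%:Z - k%:Z)); rewrite hnth hm intrB intrM -!pmulrn.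
by move=> /eqP; apply; ring.
Qed.

Lemma cot_inj (alpha : R) (n j k : nat) : (j < n)%N -> (k < n)%N ->
  sin ((alpha + j%:R * pi) / n%:R) != 0 -> sin ((alpha + k%:R * pi) / n%:R) != 0 ->
  cot ((alpha + j%:R * pi) / n%:R) = cot ((alpha + k%:R * pi) / n%:R) -> j = k.
Proof.
wlog ljk : j k / (j <= k)%N.
  move=> H hj hk sj sk e; case: (leqP j k) => l; first exact: H.
  by apply/esym/H => //; apply: ltnW.
move=> hj hk sj sk; rewrite /cot => /eqP; rewrite eqr_div // => /eqP e.
case: (eqVneq j k) => // njk; exfalso.
have ljk' : (j < k)%N by rewrite ltn_neqAle njk.
have pi0 := @pi_gt0 R.
have hn : (0 < n)%N by apply: leq_ltn_trans hj.
have nz : (n%:R : R) != 0 by rewrite pnatr_eq0 -lt0n.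
set tj := (alpha + j%:R * pi) / n%:R in sj e.
set tk := (alpha + k%:R * pi) / n%:R in sk e.
have d : tk - tj = (k - j)%:R * pi / n%:R.
  by rewrite /tk /tj natrB 1?ltnW //; field.
have : 0 < sin (tk - tj).
  apply: sin_gt0_pi; rewrite d; apply/andP; split.
    by rewrite divr_gt0 ?mulr_gt0 ?ltr0n ?subn_gt0.
  rewrite ltr_pdivrMr ?ltr0n // mulrC ltr_pM2l // ltr_nat; lia.
by rewrite sinB -e mulrC subrr ltxx.
Qed.
End T.

Theorem lemma2p1 (R : realType) (alpha : R)
    (halpha : forall k : int, alpha != k%:~R * pi) :
  let a : R := cot alpha in
  let w : R[i] := a%:C + 'i in
  (forall (n : nat) (lam : R[i]), (2 <= n)%N ->
     chi n alpha lam =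
       (2 * lam - 2 * a%:C + w + w^*) * chi n.-1 alpha lam
       - (lam - a%:C + w) * (lam - a%:C + w^*) * chi n.-2 alpha lam)
  /\ (forall (n : nat) (lam : R), (1 <= n)%N ->
     chi n alpha lam%:C =
       ((a%:C + 'i) * (lam%:C - 'i) ^+ n - (a%:C - 'i) * (lam%:C + 'i) ^+ n)
         / (2 * 'i)
     /\ chi n alpha lam%:C = (complex.Im ((a%:C + 'i) * (lam%:C - 'i) ^+ n))%:C)
  /\ (forall (n : nat) (lam : R[i]), (1 <= n)%N ->
     chi n alpha lam =
       \prod_(k < n) (lam - (cot ((alpha + k%:R * pi) / n%:R))%:C)).
Proof.
move=> a w.
have hsa : sin alpha != 0.
  by apply/eqP => /sin_eq0 [k hk]; move: (halpha k); rewrite hk eqxx.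
have chiE n lam : chi n alpha lam =
    ((a%:C + 'i) * (lam - 'i) ^+ n - (a%:C - 'i) * (lam + 'i) ^+ n) / (2 * 'i).
  by apply: (mulIf (nz2i R)); rewrite divfK ?nz2i // /chi detC.
have wc : Num.conj w = a%:C - 'i.
  by rewrite /w; apply/eqP; rewrite eq_complex /= addr0 subr0 add0r sub0r !eqxx.
split; last split.
- move=> [|[|m]] lam // _; rewrite !chiE wc /w /= !exprS; ring.
- move=> n lam _; split; first by rewrite chiE.
  have ci : conjc ('i : R[i]) = - 'i by apply/eqP; rewrite eq_complex /= oppr0 !eqxx.
  have zc : conjc ((a%:C + 'i) * (lam%:C - 'i) ^+ n) = (a%:C - 'i) * (lam%:C + 'i) ^+ n.
    have cr (x : R) : conjc (x%:C) = x%:C by apply/eqP; rewrite eq_complex /= oppr0 !eqxx.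
    have cM (x y : R[i]) : conjc (x * y) = conjc x * conjc y := rmorphM (@conjc R) x y.
    have cX (x : R[i]) k : conjc (x ^+ k) = conjc x ^+ k := rmorphXn (@conjc R) k x.
    have cD (x y : R[i]) : conjc (x + y) = conjc x + conjc y := rmorphD (@conjc R) x y.
    have cB (x y : R[i]) : conjc (x - y) = conjc x - conjc y := rmorphB (@conjc R) x y.
    by rewrite cM cX cD cB !cr ci opprK.
  rewrite chiE ImJ_sub zc.
  apply: (mulIf (nz2i R)); rewrite divfK ?nz2i //.
  set u := (a%:C - 'i) * _; set z := w * _.
  rewrite /w -/z.
  rewrite (_ : (u - z) / 2 * 'i * (2 * 'i) = (u - z) * 'i ^+ 2 * (2 / 2)); last by ring.
  by rewrite sqr_i divff ?nz2 // mulr1 mulrN1 opprB.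
- move=> n lam hn.
  pose A := Cmat n a.
  have evalchi (x : R[i]) : chi n alpha x = (char_poly A).[x].
    rewrite /chi /char_poly /char_poly_mx -horner_evalE -det_map_mx.
    congr (\det _); apply/matrixP => i j; rewrite !mxE /A.
    by rewrite rmorphB rmorphMn /= !horner_evalE hornerX hornerC.
  pose rs := [seq (cot ((alpha + k%:R * pi) / n%:R))%:C | k : 'I_n <- index_enum 'I_n].
  have sz : size rs = n by rewrite size_map [index_enum _]unlock -enumT size_enum_ord.
  have HP : char_poly A = \prod_(z <- rs) ('X - z%:P).
    have := @all_roots_prod_XsubC _ (char_poly A) rs.
    rewrite (monicP (char_poly_monic A)) scale1r; apply.
    + by rewrite size_char_poly sz.
    + apply/allP => z /mapP [k _ ->]; rewrite rootE -evalchi chiE.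
      by rewrite Fn_root ?subrr ?mul0r // sin_th_neq0.
    + rewrite uniq_rootsE map_inj_in_uniq ?index_enum_uniq // => j k _ _ /complexI h.
      apply: val_inj; apply: (@cot_inj R alpha n j k (ltn_ord j) (ltn_ord k) _ _ h); exact: sin_th_neq0.
  rewrite evalchi HP horner_prod big_map.
  by apply: eq_bigr => k _; rewrite hornerXsubC.
Qed.
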